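(* The function $g(x)=\dfrac{\exp(H(x))\log(H(x))}{x}$ is increasing on $[4,\infty)$.
   Context: $H(x)=\int_0^1\frac{t^x-1}{t-1}\,dt$ for real $x\ge1$; it is smooth, satisfies $H(n)=1+\frac12+\cdots+\frac1n$ for $n\in\mathbb{N}$, and $H(x)=\psi(x+1)+\gamma$ with $\psi=\Gamma'/\Gamma$ the digamma function. *)

(* Defs.v *)
From Stdlib Require Import Reals.
From Coquelicot Require Import Coquelicot.
Open Scope R_scope.

(* Integrand (t^x - 1)/(t - 1); its values at the endpoints t = 0 and t = 1
   (where Rpower / the quotient are not meaningful) do not affect the
   Riemann integral. *)
Definition H_integrand (x t : R) : R := (Rpower t x - 1) / (t - 1).

Definition H (x : R) : R := RInt (H_integrand x) 0 1.

Definition g (x : R) : R := exp (H x) * ln (H x) / x.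

(* Main.v *)
Require Import Defs.
From Stdlib Require Import Reals Lra Lia Psatz.
From Coquelicot Require Import Coquelicot.
Open Scope R_scope.

Definition pw (c t : R) : R := if Rlt_dec 0 t then Rpower t c else 0.

Lemma pw_pos c t : 0 < t -> pw c t = Rpower t c.
Proof. intros; unfold pw; destruct Rlt_dec; lra. Qed.

Lemma pw_nonpos c t : t <= 0 -> pw c t = 0.
Proof. intros; unfold pw; destruct Rlt_dec; lra. Qed.

Lemma pw_ge0 c t : 0 <= pw c t.
Proof. unfold pw; destruct Rlt_dec; [unfold Rpower; left; apply exp_pos|lra]. Qed.

Lemma Rpower_small c e t : 0 < c -> 0 < e -> 0 < t -> t < exp (ln e / c) ->
  Rpower t c < e.
Proof.
  intros Hc He Ht Hlt. unfold Rpower.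
  rewrite <- (exp_ln e He). apply exp_increasing.
  apply ln_increasing in Hlt; auto. rewrite ln_exp in Hlt.
  apply (Rmult_lt_compat_l c) in Hlt; auto.
  replace (c * (ln e / c)) with (ln e) in Hlt by (field; lra). lra.
Qed.

Lemma pw_cont0 c : 0 < c -> continuity_pt (pw c) 0.
Proof.
  intros Hc eps Heps. exists (exp (ln eps / c)). split; [apply exp_pos|].
  intros t [_ Ht]. unfold R_dist, dist in *; simpl in *. unfold R_dist in *. rewrite (pw_nonpos c 0) by lra.
  rewrite ?Rminus_0_r in *.
  destruct (Rlt_dec 0 t).
  - rewrite pw_pos by auto. 
    assert (Hp: 0 < Rpower t c) by (unfold Rpower; apply exp_pos).
    rewrite Rabs_pos_eq in Ht by lra.
    replace (Rpower t c - 0) with (Rpower t c) by ring.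
    rewrite Rabs_pos_eq by lra.
    apply Rpower_small; auto.
  - rewrite pw_nonpos by lra. replace (0-0) with 0 by ring. rewrite Rabs_R0; auto.
Qed.

Lemma Rpower_cont c t : 0 < t -> continuity_pt (fun u => Rpower u c) t.
Proof.
  intros Ht. apply derivable_continuous_pt.
  exists (c * Rpower t (c - 1)). apply derivable_pt_lim_power; auto.
Qed.

Lemma pw_cont c t : 0 < c -> continuity_pt (pw c) t.
Proof.
  intros Hc. destruct (Rtotal_order t 0) as [H|[H|H]].
  - apply continuity_pt_locally_ext with (f := fun _ => 0) (a := - t); [lra| |].
    + intros y Hy. unfold Rdist in Hy. rewrite pw_nonpos; auto.
      apply Rabs_def2 in Hy. lra.
    + apply continuity_pt_const. intros a b; auto.
  - subst; apply pw_cont0; auto.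
  - apply continuity_pt_locally_ext with (f := fun u => Rpower u c) (a := t); [lra| |].
    + intros y Hy. unfold Rdist in Hy. apply Rabs_def2 in Hy. rewrite pw_pos; auto. lra.
    + apply Rpower_cont; auto.
Qed.

Lemma ball_abs (t e y : R) : ball t e y -> Rabs (y - t) < e.
Proof. intros H. exact H. Qed.

Lemma locally_gt (t a : R) : a < t -> locally t (fun y => a < y).
Proof.
  intros H. assert (Hp : 0 < t - a) by lra.
  exists (mkposreal _ Hp). intros y Hy. apply ball_abs in Hy. simpl in Hy.
  apply Rabs_def2 in Hy. lra.
Qed.

Lemma locally_lt (t a : R) : t < a -> locally t (fun y => y < a).
Proof.
  intros H. assert (Hp : 0 < a - t) by lra.
  exists (mkposreal _ Hp). intros y Hy. apply ball_abs in Hy. simpl in Hy.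
  apply Rabs_def2 in Hy. lra.
Qed.

Lemma cont_of c t : continuity_pt (pw c) t -> continuous (pw c) t.
Proof. intros H; apply continuity_pt_filterlim; auto. Qed.

Lemma pw_succ c h : 0 < h -> pw (c + 1) h = h * pw c h.
Proof.
  intros Hh. rewrite !pw_pos by auto. rewrite Rpower_plus, Rpower_1 by auto. ring.
Qed.

Lemma pw_deriv c t : 0 < c -> 0 <= t ->
  is_derive (fun u => pw (c + 1) u / (c + 1)) t (pw c t).
Proof.
  intros Hc Ht. destruct Ht as [Ht|Ht].
  - apply is_derive_ext_loc with (f := fun u => Rpower u (c + 1) / (c + 1)).
    + generalize (locally_gt t 0 Ht). apply filter_imp. intros y Hy.
      rewrite pw_pos; auto.
    + rewrite pw_pos by auto.
      apply (is_derive_ext (fun u => /(c+1) * Rpower u (c+1))).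
      { intros; simpl; unfold Rdiv; ring. }
      replace (Rpower t c) with (/(c+1) * ((c + 1) * Rpower t (c + 1 - 1))).
      2:{ replace (c + 1 - 1) with c by ring. field. lra. }
      apply (is_derive_scal (fun u => Rpower u (c+1))).
      apply is_derive_Reals, derivable_pt_lim_power; auto.
  - subst t. apply is_derive_Reals. intros eps Heps.
    exists (mkposreal _ (exp_pos (ln eps / c))). intros h Hh0 Hh. simpl in Hh.
    rewrite (pw_nonpos c 0) by lra. rewrite Rplus_0_l.
    rewrite (pw_nonpos (c+1) 0) by lra.
    destruct (Rlt_dec 0 h).
    + rewrite pw_succ by auto.
      replace ((h * pw c h / (c + 1) - 0 / (c + 1)) / h - 0) with (pw c h / (c+1))
        by (field; lra).
      assert (H0 := pw_ge0 c h).
      rewrite Rabs_pos_eq by (apply Rdiv_le_0_compat; lra).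
      rewrite Rabs_pos_eq in Hh by lra.
      rewrite pw_pos by auto.
      assert (Hs := Rpower_small c eps h Hc Heps r Hh).
      apply Rle_lt_trans with (Rpower h c); auto.
      unfold Rdiv. rewrite <- (Rmult_1_r (Rpower h c)) at 2.
      apply Rmult_le_compat_l. rewrite <- pw_pos; auto.
      rewrite <- Rinv_1. apply Rinv_le_contravar; lra.
    + rewrite pw_nonpos by lra.
      replace ((0 / (c + 1) - 0 / (c + 1)) / h - 0) with 0 by (unfold Rdiv; ring).
      rewrite Rabs_R0; auto.
Qed.

Lemma IP c : 0 < c -> is_RInt (pw c) 0 1 (1 / (c + 1)).
Proof.
  intros Hc.
  replace (1 / (c + 1)) with (minus (pw (c+1) 1 / (c+1)) (pw (c+1) 0 / (c+1))).
  2:{ rewrite pw_pos by lra. rewrite pw_nonpos by lra.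
      unfold Rpower. rewrite ln_1, Rmult_0_r, exp_0. unfold minus, plus, opp; simpl. field. lra. }
  apply (is_RInt_derive (fun u => pw (c + 1) u / (c + 1))).
  - intros x Hx. rewrite Rmin_left, Rmax_right in Hx by lra. apply pw_deriv; lra.
  - intros x _. apply cont_of, pw_cont; auto.
Qed.

Definition Gr (x t : R) : R := if Req_EM_T t 1 then x else (1 - pw x t) / (1 - t).

Lemma Rpower_1_base x : Rpower 1 x = 1.
Proof. unfold Rpower. rewrite ln_1, Rmult_0_r, exp_0. auto. Qed.

Lemma Gr_cont1 x : 0 < x -> continuity_pt (Gr x) 1.
Proof.
  intros Hx eps Heps.
  destruct (derivable_pt_lim_power 1 x Rlt_0_1 eps Heps) as [del Hd].
  exists (Rmin del (/2)). split. { apply Rmin_pos; [apply cond_pos|lra]. }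
  intros y [_ Hy]. unfold R_dist, dist in *; simpl in *. unfold R_dist in *.
  assert (H1 := Rmin_l del (/2)). assert (H2 := Rmin_r del (/2)).
  unfold Gr. destruct (Req_EM_T 1 1); [|congruence].
  destruct (Req_EM_T y 1).
  - replace (x - x) with 0 by ring. rewrite Rabs_R0; auto.
  - assert (Hy2 := Rabs_def2 _ _ Hy).
    assert (Hh : y - 1 <> 0) by lra.
    specialize (Hd (y - 1) Hh). replace (1 + (y - 1)) with y in Hd by ring.
    rewrite Rpower_1_base in Hd. replace (x - 1 - 1 + 1) with (x - 1) in Hd by ring.
    rewrite Rpower_1_base, Rmult_1_r in Hd.
    rewrite pw_pos by lra.
    replace ((1 - Rpower y x) / (1 - y)) with ((Rpower y x - 1) / (y - 1)) by (field; lra).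
    apply Hd. lra.
Qed.

Lemma Gr_cont x t : 0 < x -> continuity_pt (Gr x) t.
Proof.
  intros Hx. destruct (Req_dec t 1) as [->|Ht]; [apply Gr_cont1; auto|].
  assert (Hloc : locally t (fun u => (1 - pw x u) / (1 - u) = Gr x u)).
  { destruct (Rlt_or_le t 1) as [Hl|Hl].
    - generalize (locally_lt t 1 Hl). apply filter_imp. intros u Hu.
      unfold Gr. destruct Req_EM_T; auto. lra.
    - assert (1 < t) by lra.
      generalize (locally_gt t 1 H). apply filter_imp. intros u Hu.
      unfold Gr. destruct Req_EM_T; auto. lra. }
  apply (continuity_pt_ext_loc _ _ t Hloc).
  apply continuity_pt_div.
  - apply continuity_pt_minus. apply continuity_pt_const; intros a b; auto.
    apply pw_cont; auto.
  - apply continuity_pt_minus. apply continuity_pt_const; intros a b; auto.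
    apply derivable_continuous_pt, derivable_pt_id.
  - lra.
Qed.

Lemma Gr_ex x : 0 < x -> ex_RInt (Gr x) 0 1.
Proof.
  intros Hx. apply (@ex_RInt_continuous R_CompleteNormedModule). intros z _.
  apply continuity_pt_filterlim, Gr_cont; auto.
Qed.

Lemma H_Gr x : 0 < x -> H x = RInt (Gr x) 0 1.
Proof.
  intros Hx. unfold H. apply RInt_ext. intros t Ht.
  rewrite Rmin_left, Rmax_right in Ht by lra.
  unfold H_integrand, Gr. destruct Req_EM_T; [lra|].
  rewrite pw_pos by lra. simpl. field. lra.
Qed.

Lemma pw_ex c : 0 < c -> ex_RInt (pw c) 0 1.
Proof. intros; eexists; apply IP; auto. Qed.

Lemma H_succ x : 0 < x -> H (x + 1) = H x + 1 / (x + 1).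
Proof.
  intros Hx. rewrite !H_Gr by lra.
  assert (E1 := is_RInt_unique _ _ _ _ (IP x Hx)).
  rewrite <- E1.
  assert (E2 : RInt (Gr (x + 1)) 0 1 = RInt (fun t => Gr x t + pw x t) 0 1).
  { apply RInt_ext. intros t Ht. rewrite Rmin_left, Rmax_right in Ht by lra.
    unfold Gr. destruct Req_EM_T; [lra|].
    match goal with |- ?a = ?b => change (@eq R a b) end.
    rewrite pw_succ by lra. field. lra. }
  rewrite E2. apply (RInt_plus (V := R_CompleteNormedModule)); [apply Gr_ex|apply pw_ex]; auto.
Qed.

Lemma H_1 : H 1 = 1.
Proof.
  unfold H. rewrite (RInt_ext (V := R_CompleteNormedModule) _ (fun _ => 1)).
  - rewrite RInt_const. change (scal (1 - 0) 1 = 1 :> R). unfold scal; simpl. unfold mult; simpl. ring.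
  - intros t Ht. rewrite Rmin_left, Rmax_right in Ht by lra.
    unfold H_integrand. rewrite Rpower_1 by lra. change ((t - 1) / (t - 1) = 1 :> R). field. lra.
Qed.

Lemma pointwise_F4 x d t : 0 < x -> 0 < d -> 0 < t < 1 ->
  d * Rpower t (x + d) <= (1 - Rpower t (x + d)) / (1 - t) - (1 - Rpower t x) / (1 - t).
Proof.
  intros Hx Hd Ht.
  assert (Hl : ln t <= t - 1).
  { assert (H := exp_ineq1_le (ln t)). rewrite exp_ln in H by lra. lra. }
  rewrite Rpower_plus.
  assert (HE : 0 < Rpower t d) by (unfold Rpower; apply exp_pos).
  assert (HEF : Rpower t d * exp (- (d * ln t)) = 1).
  { unfold Rpower. rewrite <- exp_plus. replace (d * ln t + - (d * ln t)) with 0 by ring. apply exp_0. }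
  assert (HF : 1 + d * (1 - t) <= exp (- (d * ln t))).
  { assert (H := exp_ineq1_le (- (d * ln t))).
    assert (d * ln t <= d * (t - 1)) by (apply Rmult_le_compat_l; lra). lra. }
  assert (HP : 0 < Rpower t x) by (unfold Rpower; apply exp_pos).
  revert HE HEF HF HP. generalize (exp (- (d * ln t))) (Rpower t d) (Rpower t x).
  intros F E P HE HEF HF HP.
  assert (Hk : E * d * (1 - t) <= 1 - E).
  { assert (E * (1 + d * (1 - t)) <= E * F) by (apply Rmult_le_compat_l; lra). lra. }
  replace ((1 - P * E) / (1 - t) - (1 - P) / (1 - t))
    with (P * (1 - E) / (1 - t)) by (field; lra).
  apply Rmult_le_reg_r with (1 - t); [lra|].
  replace (P * (1 - E) / (1 - t) * (1 - t)) with (P * (1 - E)) by (field; lra).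
  replace (d * (P * E) * (1 - t)) with (P * (E * d * (1 - t))) by ring.
  apply Rmult_le_compat_l; lra.
Qed.

Lemma H_incr x d : 0 < x -> 0 < d -> d / (x + d + 1) <= H (x + d) - H x.
Proof.
  intros Hx Hd. rewrite !H_Gr by lra.
  assert (I1 : is_RInt (fun t => d * pw (x + d) t) 0 1 (d * (1 / (x + d + 1)))).
  { apply (is_RInt_scal (V := R_CompleteNormedModule) (pw (x + d))). apply IP. lra. }
  assert (I2 : is_RInt (fun t => Gr (x + d) t - Gr x t) 0 1
                  (RInt (Gr (x + d)) 0 1 - RInt (Gr x) 0 1)).
  { apply (is_RInt_minus (V := R_CompleteNormedModule)); apply RInt_correct, Gr_ex; lra. }
  replace (d / (x + d + 1)) with (d * (1 / (x + d + 1))) by (field; lra).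
  rewrite <- (is_RInt_unique _ _ _ _ I1), <- (is_RInt_unique _ _ _ _ I2).
  apply RInt_le; [lra|eexists; eauto|eexists; eauto|].
  intros t Ht. unfold Gr. destruct Req_EM_T; [lra|].
  rewrite !pw_pos by lra.
  assert (H := pointwise_F4 x d t Hx Hd Ht). lra.
Qed.

Lemma H_mono x y : 0 < x -> x <= y -> H x <= H y.
Proof.
  intros Hx Hxy. destruct Hxy as [Hxy|<-]; [|lra].
  assert (Hi := H_incr x (y - x) Hx ltac:(lra)).
  replace (x + (y - x)) with y in Hi by ring.
  assert (0 <= (y - x) / (y + 1)) by (unfold Rdiv; apply Rmult_le_pos; [lra|left; apply Rinv_0_lt_compat; lra]). lra.
Qed.

Lemma H_2 : H 2 = 3/2.
Proof. replace 2 with (1 + 1) by ring. rewrite H_succ, H_1 by lra. field. Qed.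
Lemma H_3 : H 3 = 11/6.
Proof. replace 3 with (2 + 1) by ring. rewrite H_succ, H_2 by lra. field. Qed.
Lemma H_4 : H 4 = 25/12.
Proof. replace 4 with (3 + 1) by ring. rewrite H_succ, H_3 by lra. field. Qed.
Lemma H_5 : H 5 = 137/60.
Proof. replace 5 with (4 + 1) by ring. rewrite H_succ, H_4 by lra. field. Qed.
Lemma H_6 : H 6 = 49/20.
Proof. replace 6 with (5 + 1) by ring. rewrite H_succ, H_5 by lra. field. Qed.

Lemma real_ind (P : R -> Prop) (x0 : R) :
  (forall x, x0 <= x <= x0 + 1 -> P x) ->
  (forall x, x0 <= x -> P x -> P (x + 1)) ->
  forall x, x0 <= x -> P x.
Proof.
  intros Hb Hs.
  assert (Hn : forall n : nat, forall x, x0 <= x <= x0 + INR n + 1 -> P x).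
  { induction n as [|n IH]; intros x Hx.
    - simpl in Hx. apply Hb. lra.
    - rewrite S_INR in Hx. destruct (Rle_dec x (x0 + INR n + 1)).
      + apply IH; lra.
      + assert (Hn0 := pos_INR n). replace x with ((x - 1) + 1) by ring. apply Hs; [|apply IH]; lra. }
  intros x Hx.
  destruct (archimed (x - x0)) as [Hup _].
  assert (Hz : (0 <= up (x - x0))%Z).
  { apply le_IZR. simpl. lra. }
  destruct (IZN _ Hz) as [n Hn'].
  apply (Hn n). rewrite Hn', <- INR_IZR_INZ in Hup. split; lra.
Qed.

Lemma H_aux z : 2 <= z -> H z <= z / 3 + 7 / 6.
Proof.
  revert z. apply (real_ind (fun z => H z <= z / 3 + 7 / 6) 2).
  - intros x Hx. assert (Hm : H x <= H 3) by (apply H_mono; lra). rewrite H_3 in Hm. lra.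
  - intros x Hx IH. rewrite H_succ by lra.
    assert (Hd : 1 / (x + 1) <= 1 / 3).
    { apply Rmult_le_reg_r with (3 * (x + 1)); [lra|].
      replace (1 / (x + 1) * (3 * (x + 1))) with 3 by (field; lra). lra. }
    lra.
Qed.

Lemma H_ge1 x : 1 <= x -> 1 <= H x.
Proof. intros Hx. rewrite <- H_1. apply H_mono; lra. Qed.

Lemma H_Q x : 4 <= x -> 101 * (H (x + 1) * (H (x + 1) - 1)) < 100 * x.
Proof.
  revert x. apply (real_ind (fun x => 101 * (H (x + 1) * (H (x + 1) - 1)) < 100 * x) 4).
  - intros x Hx. assert (Hm : H (x + 1) <= H 6) by (apply H_mono; lra). rewrite H_6 in Hm.
    assert (Hg : 1 <= H (x + 1)) by (apply H_ge1; lra).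
    nra.
  - intros x Hx IH. replace (x + 1 + 1) with ((x + 1) + 1) by ring.
    rewrite H_succ by lra.
    assert (Ha := H_aux (x + 1) ltac:(lra)).
    assert (Hg := H_ge1 (x + 1) ltac:(lra)).
    set (h := H (x + 1)) in *.
    set (a := 1 / (x + 1 + 1)).
    assert (Ha1 : a * (x + 2) = 1) by (unfold a; field; lra).
    assert (Ha0 : 0 < a) by (unfold a; apply Rdiv_lt_0_compat; lra).
    assert (Ha6 : a <= 1 / 6).
    { apply Rmult_le_reg_r with (6 * (x + 2)); [lra|].
      replace (1 / 6 * (6 * (x + 2))) with (x + 2) by field. nra. }
    nra.
Qed.

Lemma ln_diff u v : 0 < u -> 0 < v -> ln v - ln u <= (v - u) / u.
Proof.
  intros Hu Hv. assert (Hq : 0 < v / u) by (apply Rdiv_lt_0_compat; auto).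
  assert (E := exp_ineq1_le (ln (v / u))). rewrite exp_ln in E by auto.
  rewrite ln_div in E by auto.
  replace ((v - u) / u) with (v / u - 1) by (field; lra). lra.
Qed.

Lemma g_exp x : 0 < x -> 1 < H x -> g x = exp (H x + ln (ln (H x)) - ln x).
Proof.
  intros Hx Hh. unfold g. unfold Rminus. rewrite !exp_plus, exp_Ropp.
  assert (0 < ln (H x)) by (rewrite <- ln_1; apply ln_increasing; lra).
  rewrite !exp_ln by lra. unfold Rdiv. ring.
Qed.

Lemma local_step x d : 4 <= x -> 0 < d -> d < 1 / 100 -> g x < g (x + d).
Proof.
  intros Hx Hd Hd1.
  assert (Ha : H 4 <= H x) by (apply H_mono; lra). rewrite H_4 in Ha.
  assert (Hb1 : H x <= H (x + d)) by (apply H_mono; lra).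
  assert (Hbh : H (x + d) <= H (x + 1)) by (apply H_mono; lra).
  assert (Hinc := H_incr x d ltac:(lra) Hd).
  assert (HQ := H_Q x Hx).
  rewrite (g_exp x), (g_exp (x + d)) by lra.
  apply exp_increasing.
  assert (S1 := ln_diff x (x + d) ltac:(lra) ltac:(lra)).
  set (a := H x) in *. set (b := H (x + d)) in *. set (h := H (x + 1)) in *.
  assert (S2 := ln_diff b a ltac:(lra) ltac:(lra)).
  assert (La : 0 < ln a) by (rewrite <- ln_1; apply ln_increasing; lra).
  assert (Lb : 0 < ln b) by (rewrite <- ln_1; apply ln_increasing; lra).
  assert (Lab : ln a <= ln b) by (apply ln_le; lra).
  assert (S3 := ln_diff (ln b) (ln a) Lb La).
  assert (S4 : ln b <= b - 1).
  { assert (E := exp_ineq1_le (ln b)). rewrite exp_ln in E by lra. lra. }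
  set (L := ln b) in *. set (La' := ln a) in *.
  assert (HK : 101 * (b * (b - 1)) < 100 * x).
  { assert (b * (b - 1) <= h * (h - 1)) by nra. lra. }
  set (D := b - a) in *.
  assert (HD : d / (x + d + 1) <= D) by exact Hinc.
  assert (T1 : D / b <= L - La') by (unfold D; lra).
  assert (T2 : D / (b * (b - 1)) <= ln L - ln La').
  { assert (E1 : (L - La') / L <= ln L - ln La') by lra.
    assert (E2 : D / (b * (b - 1)) <= (L - La') / L).
    { assert (0 <= D) by (unfold D; lra).
      replace (D / (b * (b - 1))) with ((D / b) / (b - 1)) by (field; lra).
      apply Rle_trans with ((D / b) / L).
      - apply Rmult_le_compat_l. apply Rdiv_le_0_compat; lra.
        apply Rinv_le_contravar; lra.
      - apply Rmult_le_compat_r. left; apply Rinv_0_lt_compat; lra. lra. }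
    lra. }
  assert (T3 : d / x < D + D / (b * (b - 1))).
  { set (K := b * (b - 1)) in *.
    assert (HK0 : 0 < K) by (unfold K; nra).
    assert (E : d / x < d / (x + d + 1) + d / (x + d + 1) / K).
    { apply Rmult_lt_reg_r with (x * (x + d + 1) * K). { apply Rmult_lt_0_compat; [apply Rmult_lt_0_compat|]; lra. }
      replace (d / x * (x * (x + d + 1) * K)) with (d * (x + d + 1) * K) by (field; lra).
      replace ((d / (x + d + 1) + d / (x + d + 1) / K) * (x * (x + d + 1) * K))
        with (d * x * K + d * x) by (field; lra).
      assert (Hm1 : (d + 1) * K <= 101 / 100 * K) by (apply Rmult_le_compat_r; lra).
      assert (Hm2 : 0 < d * (x - (d + 1) * K)) by (apply Rmult_lt_0_compat; lra).
      nra. }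
    assert (d / (x + d + 1) / K <= D / K).
    { apply Rmult_le_compat_r; [left; apply Rinv_0_lt_compat; lra|lra]. }
    lra. }
  replace ((x + d - x) / x) with (d / x) in S1 by (field; lra).
  assert (HDe : D = b - a) by reflexivity. lra.
Qed.

Theorem mainTheorem17 :
  forall x y : R, 4 <= x -> x < y -> g x < g y.
Proof.
  intros x y Hx Hxy.
  destruct (archimed (100 * (y - x))) as [Hup _].
  assert (Hz : (0 <= up (100 * (y - x)))%Z).
  { apply le_IZR. lra. }
  destruct (IZN _ Hz) as [n Hn']. rewrite Hn', <- INR_IZR_INZ in Hup.
  set (N := S n).
  assert (HN : 100 * (y - x) < INR N) by (unfold N; rewrite S_INR; lra).
  assert (HN0 : 0 < INR N) by (unfold N; apply lt_0_INR; lia).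
  set (d := (y - x) / INR N).
  assert (Hd : 0 < d) by (unfold d; apply Rdiv_lt_0_compat; lra).
  assert (Hd1 : d < 1 / 100).
  { unfold d. apply Rmult_lt_reg_r with (100 * INR N). nra.
    replace ((y - x) / INR N * (100 * INR N)) with (100 * (y - x)) by (field; lra).
    replace (1 / 100 * (100 * INR N)) with (INR N) by field. lra. }
  assert (Hk : forall k : nat, g x < g (x + INR (S k) * d)).
  { induction k as [|k IH].
    - simpl. replace (x + 1 * d) with (x + d) by ring. apply local_step; lra.
    - apply Rlt_trans with (g (x + INR (S k) * d)); auto.
      rewrite (S_INR (S k)).
      replace (x + (INR (S k) + 1) * d) with ((x + INR (S k) * d) + d) by ring.
      apply local_step; auto.
      assert (0 <= INR (S k) * d) by (apply Rmult_le_pos; [apply pos_INR|lra]). lra. }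
  specialize (Hk n). fold N in Hk.
  replace (x + INR N * d) with y in Hk by (unfold d; field; lra). auto.
Qed.
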